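(* Let $m,n\in\mathbb{N}$ and let $\psi:\mathbb{F}[X]^m\to\{k^r:r\in\mathbb{Z}\}\cup\{0\}$ satisfy $\psi(\mathbf{q})\le1$ for all $\mathbf{q}$ and $\psi(\mathbf{q})>0$ for infinitely many $\mathbf{q}$. Then $$\min\{\delta(\psi),n\}\ge\min\{\eta(\psi),n\}.$$
   Context: $\mathbb{F}$ is a finite field with $k$ elements; for $\mathbf{q}\in\mathbb{F}[X]^m$, $|\mathbf{q}|_\infty=\max_i k^{\deg q_i}$. $\eta(\psi)=\inf\{\eta\in\mathbb{R}:\sum_{\mathbf{q}\in\mathbb{F}[X]^m\setminus\{0\}}|\mathbf{q}|_\infty^n(\psi(\mathbf{q})/|\mathbf{q}|_\infty)^\eta<\infty\}$. For $N>0$ and $v>0$: $C(N,v;\psi)=\#\{\mathbf{q}\in\mathbb{F}[X]^m\setminus\{0\}:|\mathbf{q}|_\infty\le N,\ \psi(\mathbf{q})\ge|\mathbf{q}|_\infty^{-v}\}$; when $C(N,v;\psi)\to\infty$, $\gamma(v;\psi)=\sup\{\gamma\in\mathbb{R}:\limsup_{N\to\infty}C(N,v;\psi)N^{-\gamma}>0\}$; $\delta(v;\psi)=\frac{n+\gamma(v;\psi)}{v+1}$ if $C(N,v;\psi)\to\infty$ as $N\to\infty$, and $\delta(v;\psi)=0$ otherwise; $\delta(\psi)=\sup_{v\ge0}\delta(v;\psi)$. *)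

(* Defs.v *)
From HB Require Import structures.
From mathcomp Require Import all_boot all_order all_algebra all_field.
From mathcomp Require Import all_classical all_reals all_analysis.
Set Implicit Arguments. Unset Strict Implicit. Unset Printing Implicit Defensive.
Import Order.TTheory GRing.Theory Num.Theory.
Import numFieldNormedType.Exports.
Local Open Scope classical_set_scope.
Local Open Scope ring_scope.

Definition polyvec (F : finFieldType) (m : nat) := {ffun 'I_m -> {poly F}}.

(* |q|_oo = max_i k^{deg q_i}, with k = #|F| and k^{deg 0} = k^{-oo} = 0 *)
Definition qnorm (F : finFieldType) (m : nat) (q : polyvec F m) : nat := (
  \max_(i < m) (if q i == 0%R then 0%N else (#|F| ^ (size (q i)).-1)%N))%N.

Section defs.
Variables (R : realType) (F : finFieldType) (m n : nat) (psi : polyvec F m -> R).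
Local Open Scope ereal_scope.

Definition nzvec : set (polyvec F m) := [set q : polyvec F m | q != 0%R].

Definition eta_psi : \bar R :=
  ereal_inf [set e%:E | e in [set e : R |
    \esum_(q in nzvec) (((qnorm q)%:R ^+ n * powR (psi q / (qnorm q)%:R) e)%R)%:E
      < +oo]].

Definition Ccount (N v : R) : \bar R :=
  \esum_(q in [set q : polyvec F m | q != 0%R /\ ((qnorm q)%:R <= N)%R /\
                      (powR (qnorm q)%:R (- v) <= psi q)%R]) 1.

Definition Ccount_to_infty (v : R) : Prop :=
  forall M : R, \forall N \near +oo%R, M%:E <= Ccount N v.

Definition gamma_psi (v : R) : \bar R :=
  ereal_sup [set g%:E | g in [set g : R |
    0 < limf_esup (fun N : R => Ccount N v * (powR N (- g))%:E) (+oo%R : set_system R)]].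

Definition delta_v (v : R) : \bar R :=
  if `[< Ccount_to_infty v >] then (n%:R%:E + gamma_psi v) * ((v + 1)^-1)%:E
  else 0.

Definition delta_psi : \bar R := ereal_sup [set delta_v v | v in [set v : R | (0 <= v)%R]].
End defs.

(* Main.v *)
Require Import Defs.
From HB Require Import structures.
From mathcomp Require Import all_boot all_order all_algebra all_field.
From mathcomp Require Import finmap.
From mathcomp Require Import all_classical all_reals all_analysis.
From mathcomp Require Import lra.
Import Order.TTheory GRing.Theory Num.Theory.
Import numFieldNormedType.Exports.
Local Open Scope classical_set_scope.
Local Open Scope ring_scope.

Section General.
Variable R : realType.
Local Open Scope ereal_scope.

Lemma esum_subset (T : choiceType) (A B : set T) (a : T -> \bar R) :
  A `<=` B -> (forall x, B x -> 0 <= a x) -> esum A a <= esum B a.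
Proof.
move=> AB a0; rewrite esum_mkcond [X in _ <= X]esum_mkcond; apply: le_esum => x _.
case: ifPn => xA; first by rewrite ifT // inE; apply: AB; rewrite -inE.
by case: ifPn => // xB; apply: a0; rewrite -inE.
Qed.

Lemma esum_fin_card (X : finType) (A : set X) :
  \esum_(x in A) (1 : \bar R) <= (#|X|%:R)%:E.
Proof.
rewrite esum_fset //; last exact: finite_finset.
rewrite fsbig_finite //=.
set s := finmap.enum_fset _.
have -> : \sum_(x <- s) (1 : \bar R) = ((size s)%:R)%:E.
  by rewrite -sum1_size natr_sum sumEFin.
rewrite lee_fin ler_nat.
have Us : uniq s by apply: finmap.fset_uniq.
by rewrite -(card_uniqP Us) max_card.
Qed.
End General.
Section QN.
Variables (F : finFieldType) (m : nat).
Local Notation T := (polyvec F m).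
Local Notation k := #|F|.

Lemma k_gt1 : (1 < k)%N. Proof. exact: finNzRing_gt1. Qed.

Lemma qnorm_pow (q : T) : qnorm q = 0%N \/ exists d, qnorm q = (k ^ d)%N.
Proof.
rewrite /qnorm; elim: (index_enum _) => [|i s IH]; first by rewrite big_nil; left.
rewrite big_cons.
have Hi : (if q i == 0 then 0%N else (k ^ (size (q i)).-1)%N) = 0%N \/
   exists d, (if q i == 0 then 0%N else (k ^ (size (q i)).-1)%N) = (k ^ d)%N.
  by case: eqP => _; [left | right; eexists].
set a := (if _ then _ else _) in Hi *; set b := \big[_/_]_(_ <- s) _ in IH *.
by case: (leqP a b) => H.
Qed.

Lemma qnorm_gt0 (q : T) : q != 0 -> (0 < qnorm q)%N.
Proof.
move=> q0; have [i qi] : exists i, q i != 0.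
  apply/existsP; apply: contraNT q0; rewrite negb_exists => /forallP H.
  by apply/eqP/ffunP => i; rewrite ffunE; apply/eqP; move: (H i); rewrite negbK.
apply: (@leq_trans (if q i == 0 then 0%N else (k ^ (size (q i)).-1)%N)).
  by rewrite (negPf qi) expn_gt0 (ltnW k_gt1).
exact: (@leq_bigmax _ (fun i => if q i == 0 then 0%N else (k ^ (size (q i)).-1)%N)).
Qed.

Lemma qnorm_ge1 (q : T) : q != 0 -> exists d, qnorm q = (k ^ d)%N.
Proof.
move=> q0; case: (qnorm_pow q) => // H; move: (@qnorm_gt0 q q0); by rewrite H.
Qed.

Lemma qnorm_size (q : T) d i : (qnorm q <= k ^ d)%N -> (size (q i) <= d.+1)%N.
Proof.
move=> Hq; have [->|qi] := eqVneq (q i) 0; first by rewrite size_poly0.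
have : (k ^ (size (q i)).-1 <= k ^ d)%N.
  apply: leq_trans Hq.
  have := (@leq_bigmax _ (fun i => if q i == 0 then 0%N else (k ^ (size (q i)).-1)%N) i).
  by rewrite (negPf qi).
rewrite leq_exp2l ?k_gt1 // => H; rewrite -ltnS in H.
by apply: leq_trans H; rewrite leqSpred.
Qed.

Lemma count_ball (R : realType) d :
  (\esum_(q in [set q : T | (qnorm q <= k ^ d)%N]) (1 : \bar R) <=
  ((k ^ (d.+1 * m))%:R)%:E)%E.
Proof.
pose phi (x : {ffun 'I_m -> 'rV[F]_(d.+1)}) : T := [ffun i => rVpoly (x i)].
apply: (le_trans (@esum_subset R _ _ (phi @` setT) _ _ _)).
- move=> q /= Hq; exists [ffun i => poly_rV (q i)] => //.
  by apply/ffunP => i; rewrite !ffunE poly_rV_K //; exact: qnorm_size.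
- by move=> *; exact: lee01.
rewrite esum_image; last first.
  move=> x y _ _ /ffunP H; apply/ffunP => i; move: (H i); rewrite !ffunE.
  by move=> /(congr1 (@poly_rV _ d.+1)); rewrite !rVpolyK.
apply: (le_trans (esum_fin_card R _ _)).
by rewrite card_ffun card_mx card_ord mul1n -expnM.
Qed.

Lemma esum_cst_bound (R : realType) (I : set T) (x y : R) : 0 <= x ->
  (\esum_(i in I) (1 : \bar R) <= y%:E -> \esum_(i in I) x%:E <= (x * y)%:E)%E.
Proof.
move=> x0 H; apply: ge_ereal_sup => _ [X [finX XI] <-].
have HX : (\sum_(i \in X) (1 : \bar R) <= y%:E)%E.
  apply: le_trans H; apply: ereal_sup_ubound; by exists X.
move: HX; rewrite !fsbig_finite //=.
set s := finmap.enum_fset _.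
have -> : (\sum_(i <- s) (1 : \bar R))%E = ((size s)%:R)%:E.
  by rewrite -sum1_size natr_sum sumEFin.
have -> : (\sum_(i <- s) x%:E)%E = (x * (size s)%:R)%:E.
  rewrite sumEFin -sum1_size natr_sum mulr_sumr; congr (_%:E); apply: eq_bigr => *; by rewrite mulr1.
rewrite !lee_fin => Hs; exact: ler_wpM2l.
Qed.

Lemma shell_sum (R : realType) (A : set T) (f : T -> \bar R) (a b c : R) :
  (forall q, A q -> q != 0) -> (forall q, (0 <= f q)%E) ->
  (forall q d, A q -> qnorm q = (k ^ d)%N -> (f q <= (b ^+ d)%:E)%E) ->
  (forall d, \esum_(q in A `&` [set q | qnorm q = (k ^ d)%N]) (1 : \bar R)
     <= (c * a ^+ d)%:E)%E ->
  0 < a -> 0 < b -> a * b < 1 -> 0 <= c ->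
  (\esum_(q in A) f q < +oo)%E.
Proof.
move=> A0 f0 fb cnt a0 b0 ab1 c0.
have AE : A = \bigcup_(d in setT) (A `&` [set q | qnorm q = (k ^ d)%N]).
  apply/seteqP; split => [q Aq|q [d _ [Aq _]] //].
  by have [d Hd] := @qnorm_ge1 q (A0 _ Aq); exists d.
rewrite AE esum_bigcupT //; last first.
  move=> i j _ _ [q [[_ Hi] [_ Hj]]]; apply: (expnI k_gt1); by rewrite -Hi -Hj.
apply: (@le_lt_trans _ _ (\esum_(d in [set: nat]) ((c * (a * b) ^+ d)%:E))).
  apply: le_esum => d _.
  apply: (@le_trans _ _ (\esum_(q in A `&` [set q | qnorm q = (k ^ d)%N]) (b ^+ d)%:E)).
    by apply: le_esum => q [Aq Hq]; exact: fb.
  apply: (le_trans (@esum_cst_bound R _ (b ^+ d) _ (exprn_ge0 d (ltW b0)) (cnt d))).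
  by rewrite lee_fin exprMn mulrCA [b ^+ d * _]mulrC.
rewrite -nneseries_esumT; last first.
  by move=> d; rewrite lee_fin mulr_ge0 // exprn_ge0 // mulr_ge0 // ltW.
apply: (@le_lt_trans _ _ ((c / (1 - a * b))%:E)); last exact: ltry.
apply: lime_le; first by apply: is_cvg_nneseries => n _ _; rewrite lee_fin mulr_ge0 // exprn_ge0 // mulr_ge0 // ltW.
apply: nearW => n.
have abp : 0 < a * b by rewrite mulr_gt0.
have := geometric_le_lim n c0 abp; rewrite gtr0_norm // => /(_ ab1).
rewrite sumEFin lee_fin => H; apply: le_trans H.
by rewrite /series /geometric /=.
Qed.
End QN.
Section Pow.
Variable R : realType.
Implicit Types a x y : R.

Lemma powR_posE a x : 0 < a -> powR a x = expR (x * ln a).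
Proof. by move=> a0; rewrite /powR gt_eqF. Qed.

Lemma powR_lt1' a x : 1 < a -> x < 0 -> powR a x < 1.
Proof.
move=> a1 x0; rewrite powR_posE ?(lt_trans ltr01) // expR_lt1.
by rewrite nmulr_rlt0 // ln_gt0.
Qed.

Lemma powR_ge1' a x : 1 <= a -> 0 <= x -> 1 <= powR a x.
Proof. by move=> a1 x0; rewrite -(powRr0 a); apply: ler_powR. Qed.

Lemma powR_natpow a x d : 0 <= a -> powR (a ^+ d) x = (powR a x) ^+ d.
Proof.
move=> a0; rewrite -powR_mulrn // -powRrM mulrC powRrM powR_mulrn //.
exact: powR_ge0.
Qed.

Lemma powR_mono a x y : 1 <= a -> x <= y -> powR a x <= powR a y.
Proof. by move=> a1 xy; apply: ler_powR. Qed.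

Lemma powR_addE a x y : 0 < a -> powR a (x + y) = powR a x * powR a y.
Proof. by move=> a0; rewrite powRD // (gt_eqF a0) implybT. Qed.
End Pow.
Section Main.
Variables (R : realType) (F : finFieldType) (m n : nat) (psi : polyvec F m -> R).
Hypothesis psi0 : forall q, 0 <= psi q.
Hypothesis psi1 : forall q, psi q <= 1.
Local Notation T := (polyvec F m).
Local Notation k := #|F|.
Local Notation kR := (#|F|%:R : R).
Local Notation qn q := ((qnorm q)%:R : R).

Lemma kR_gt1 : 1 < kR. Proof. by rewrite ltr1n k_gt1. Qed.
Lemma kR_gt0 : 0 < kR. Proof. exact: lt_trans ltr01 kR_gt1. Qed.

Lemma qn_ge1 (q : T) : q != 0 -> 1 <= qn q.
Proof. by move=> q0; rewrite ler1n; apply: qnorm_gt0. Qed.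

Lemma qn_gt0 (q : T) : q != 0 -> 0 < qn q.
Proof. by move=> q0; apply: (lt_le_trans ltr01 (qn_ge1 q q0)). Qed.

Lemma qn_shell (q : T) d : qnorm q = (k ^ d)%N -> qn q = kR ^+ d.
Proof. by move=> ->; rewrite natrX. Qed.

Definition term (s : R) (q : T) : R := qn q ^+ n * powR (psi q / qn q) s.

Lemma term_ge0 s q : 0 <= term s q.
Proof. by rewrite /term mulr_ge0 ?exprn_ge0 ?powR_ge0. Qed.

Lemma term_bound s e (q : T) : 0 <= s -> q != 0 -> psi q <= powR (qn q) e ->
  term s q <= powR (qn q) (n%:R + e * s - s).
Proof.
move=> s0 q0 He; have qp := qn_gt0 q q0.
have E1 : powR (psi q / qn q) s = powR (psi q) s * powR (qn q) (- s).
  rewrite powRM //.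
  by rewrite -(powR_inv1 (ltW qp)) -powRrM mulN1r.
have E2 : powR (qn q) (n%:R + e * s - s) = qn q ^+ n * powR (qn q) (e * s) * powR (qn q) (- s).
  by rewrite powR_addE // powR_addE // powR_mulrn // ltW.
rewrite /term E1 E2 mulrA ler_wpM2r ?powR_ge0 // ler_wpM2l ?exprn_ge0 ?(ltW qp) //.
rewrite powRrM; apply: ge0_ler_powR => //; rewrite ?nnegrE ?powR_ge0 //.
Qed.

Local Open Scope ereal_scope.

Definition Cset (N v : R) := [set q : T | q != 0%R /\ ((qnorm q)%:R <= N)%R /\
                      (powR (qnorm q)%:R (- v) <= psi q)%R].

Lemma CcountE N v : Ccount psi N v = \esum_(q in Cset N v) 1.
Proof. by []. Qed.

Lemma Cmono N N' v : (N <= N')%R -> Ccount psi N v <= Ccount psi N' v.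
Proof.
move=> NN; rewrite !CcountE; apply: esum_subset => [q [q0 [H1 H2]]|q _].
  by split => //; split => //; exact: le_trans H1 NN.
exact: lee01.
Qed.

Lemma Cfin_ge (B : {fset T}) (N v : R) : [set` B] `<=` Cset N v ->
  ((size (finmap.enum_fset B))%:R)%:E <= Ccount psi N v.
Proof.
move=> BC; rewrite CcountE; apply: (le_trans _ (@esum_subset R _ _ _ _ BC _)); last first.
  by move=> *; exact: lee01.
rewrite esum_fset //.
rewrite fsbig_finite //= set_fsetK.
by rewrite -sum1_size natr_sum sumEFin.
Qed.

Definition Aset (w : R) := [set q : T | q != 0%R /\ (powR (qn q) (- w) <= psi q)%R].

Lemma A_inf_Cinf w : infinite_set (Aset w) -> Ccount_to_infty psi w.
Proof.
move=> Hi M; have [B BA HB] := infinite_set_fset (Num.trunc `|M|).+1 Hi.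
pose Nm := (\max_(q <- finmap.enum_fset B) qnorm q)%N.
exists (Nm%:R); split; first exact: realn.
move=> N HN; apply: (le_trans _ (Cfin_ge B N w _)); last first.
  move=> q /= qB; have [q0 Hq] := BA q qB; split => //; split => //.
  apply: ltW; apply: le_lt_trans HN; rewrite ler_nat.
  by apply: (@leq_bigmax_seq _ _ xpredT (fun q => qnorm q) q).
rewrite lee_fin; apply: (le_trans (ler_norm M)); apply: ltW.
apply: (lt_le_trans (truncnS_gt _)); by rewrite ler_nat.
Qed.

Lemma gamma_ge0 w : Ccount_to_infty psi w -> 0 <= gamma_psi psi w.
Proof.
move=> Hw; rewrite /gamma_psi; apply: ereal_sup_ubound; exists 0%R => //=.
have -> : (fun N : R => Ccount psi N w * (powR N (- 0%R))%:E) = (fun N => Ccount psi N w).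
  by apply: funext => N; rewrite oppr0 powRr0 mule1.
apply: (lt_le_trans lte01); apply: le_ereal_inf_tmp => _ [V HV <-].
have [M [Mr HM]] := HV; have [M' [M'r HM']] := Hw 1%R.
pose x := (Num.max M M' + 1)%R.
have xM : (M < x)%R by rewrite /x ltr_pwDr // le_max lexx.
have xM' : (M' < x)%R by rewrite /x ltr_pwDr // le_max lexx orbT.
apply: le_trans (HM' _ xM') _; apply: ereal_sup_ubound; exists x => //; exact: HM.
Qed.

Lemma delta_v_ge0 w : (0 <= w)%R -> 0 <= delta_v n psi w.
Proof.
move=> w0; rewrite /delta_v; case: asboolP => H //.
apply: mule_ge0; first by apply: adde_ge0 => //; exact: gamma_ge0.
by rewrite lee_fin invr_ge0 addr_ge0.
Qed.

Lemma count_from_gamma w (b0 : R) : (0 <= w)%R -> Ccount_to_infty psi w ->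
  delta_v n psi w < b0%:E ->
  exists g c : R, [/\ (0 <= g)%R, (g < b0 * (w + 1) - n%:R)%R, (1 <= c)%R &
     forall N : R, (1 <= N)%R -> Ccount psi N w <= (c * powR N g)%:E].
Proof.
move=> w0 Hc Hd; have gam0 := gamma_ge0 w Hc.
move: Hd; rewrite /delta_v asboolT //.
have w1 : (0 < w + 1)%R by rewrite ltr_wpDl.
case E : (gamma_psi psi w) gam0 => [γ| |] gam0.
2: by rewrite addey // mulyr gtr0_sg ?invr_gt0 // mul1e ltNge leey.
2: by [].
rewrite -EFinD lte_fin ltr_pdivrMr // => Hγ.
rewrite lee_fin in gam0.
pose bd := (b0 * (w + 1) - n%:R)%R.
have γbd : (γ < bd)%R by rewrite /bd ltrBrDl.
pose g := ((γ + bd) / 2)%R.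
have gγ : (γ < g)%R by rewrite /g ltr_pdivlMr // mulr2n mulrDr mulr1 ltrD2l.
have gbd : (g < bd)%R by rewrite /g ltr_pdivrMr // mulr2n mulrDr mulr1 ltrD2r.
have g0 : (0 <= g)%R by apply: le_trans (ltW gγ).
have Hl : ~ (0 < limf_esup (fun N : R => Ccount psi N w * (powR N (- g))%:E)
                 (+oo%R : set_system R)).
  move=> H; have : g%:E <= gamma_psi psi w by apply: ereal_sup_ubound; exists g.
  by rewrite E lee_fin leNgt gγ.
have : limf_esup (fun N : R => Ccount psi N w * (powR N (- g))%:E)
                 (+oo%R : set_system R) < 1.
  by apply: le_lt_trans lte01; rewrite leNgt; apply/negP.
move=> /ereal_inf_lt [_ [V [M [Mr HM]] <-] HV].
have key : forall x : R, (Num.max M 0 < x)%R -> Ccount psi x w <= (powR x g)%:E.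
  move=> x; rewrite gt_max => /andP [xM x0].
  have p0 : (0 < powR x g)%R by apply: powR_gt0.
  have Hf : Ccount psi x w * (powR x (- g))%:E < 1.
    apply: le_lt_trans HV; apply: ereal_sup_ubound; exists x => //; exact: HM.
  rewrite leNgt; apply/negP => Hlt; move: Hf; apply/negP; rewrite -leNgt.
  have -> : (1 = (powR x g)%:E * (powR x (- g))%:E)%E.
    by rewrite -EFinM powRN mulfV // gt_eqF.
  apply: lee_wpmul2r; last exact: ltW.
  by rewrite lee_fin powR_ge0.
pose N1 := (Num.max M 0 + 1)%R.
have N1M : (Num.max M 0 < N1)%R by rewrite /N1 ltrDl.
have N11 : (1 <= N1)%R by rewrite /N1 lerDr le_max lexx orbT.
exists g, (powR N1 g); split => //; first exact: powR_ge1'.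
move=> N N1le.
have pN : (1 <= powR N g)%R by apply: powR_ge1'.
have [NM|NM] := ltP (Num.max M 0%R) N.
  apply: le_trans (key N NM) _; rewrite lee_fin ler_peMl // ?powR_ge0 //.
  exact: powR_ge1'.
apply: le_trans (Cmono _ _ w (ltW (le_lt_trans NM N1M))) _.
apply: le_trans (key N1 N1M) _; rewrite lee_fin ler_peMr //.
by apply: le_trans (@powR_ge1' R _ _ N11 g0).
Qed.

Section Fin.
Variables (s s' : R).
Hypothesis s'0 : (0 < s')%R.
Hypothesis ss' : (s' < s)%R.
Hypothesis Hd : forall v : R, (0 <= v)%R -> delta_v n psi v < s'%:E.

Let s0 : (0 < s)%R. Proof. exact: lt_trans s'0 ss'. Qed.
Let h : R := ((s - s') / s)%R.
Let hs : (h * s = s - s')%R. Proof. by rewrite /h mulfVK // gt_eqF. Qed.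
Let h0 : (0 < h)%R. Proof. by rewrite /h divr_gt0 // subr_gt0. Qed.
Let J : nat := (Num.trunc ((m + n)%:R / (s - s'))).+1.
Let HJ : ((m + n)%:R < J%:R * (s - s'))%R.
Proof.
rewrite -ltr_pdivrMr ?subr_gt0 //; exact: truncnS_gt.
Qed.
Let w (j : nat) : R := (j%:R * h)%R.
Let w0 j : (0 <= w j)%R. Proof. by rewrite /w mulr_ge0 // ltW. Qed.

Let cls (j : nat) := [set q : T | q != 0%R /\ (powR (qn q) (- w j) <= psi q)%R /\
                                   (psi q <= powR (qn q) (h - w j))%R].
Let Rem := [set q : T | q != 0%R /\ (psi q < powR (qn q) (- w J))%R].
Let f (q : T) : \bar R := (term s q)%:E.

Let f0 q : 0 <= f q. Proof. by rewrite lee_fin term_ge0. Qed.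

Lemma cover (q : T) : q != 0%R -> Rem q \/ exists2 j, (j <= J)%N & cls j q.
Proof.
move=> q0; have [HR|HR] := ltP (psi q) (powR (qn q) (- w J)); first by left.
right.
have exP : exists j, (powR (qn q) (- w j) <= psi q)%R by exists J.
case: (ex_minnP exP) => j Pj Hmin; exists j; first exact: Hmin.
split => //; split => //.
case: j Pj Hmin => [|j] Pj Hmin.
  rewrite /w mul0r subr0; apply: le_trans (psi1 q) _.
  exact: (@powR_ge1' R _ _ (qn_ge1 q q0) (ltW h0)).
have : ~~ (powR (qn q) (- w j) <= psi q)%R.
  by apply/negP => /Hmin; rewrite ltnn.
rewrite -ltNge => /ltW; congr (_ <= powR _ _)%R.
by rewrite /w -natr1 mulrDl mul1r opprD addrCA subrr addr0.
Qed.

Lemma split_bound : \esum_(q in @nzvec F m) f q <=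
  \sum_(j < J.+1) \esum_(q in @nzvec F m `&` cls j) f q + \esum_(q in @nzvec F m `&` Rem) f q.
Proof.
have -> : (\sum_(j < J.+1) \esum_(q in @nzvec F m `&` cls j) f q) =
    \esum_(q in @nzvec F m) \sum_(j < J.+1) (if q \in cls j then f q else 0).
  rewrite esum_sum; last by move=> q j _ _; case: ifP.
  by apply: eq_bigr => j _; exact: esum_mkcondr.
rewrite esum_mkcondr -esumD; last 2 first.
- by move=> q _; apply: sume_ge0 => j _; case: ifP.
- by move=> q _; case: ifP.
apply: le_esum => q; rewrite /nzvec /= => q0.
case: (cover q q0) => [HR|[j jJ Hc]].
  rewrite mem_set //; apply: lee_paddl => //.
  by apply: sume_ge0 => j _; case: ifP.
apply: lee_paddr; first by case: ifP.
rewrite (bigD1 (Ordinal (jJ : (j < J.+1)%N))) //= mem_set //; apply: lee_paddr => //.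
by apply: sume_ge0 => i _; case: ifP.
Qed.

Let fin_esum_lt (A : set T) : finite_set A -> \esum_(q in A) f q < +oo.
Proof.
move=> Afin; rewrite esum_fset //.
rewrite fsbig_finite //= sumEFin; exact: ltry.
Qed.

Lemma cls_fin j : \esum_(q in @nzvec F m `&` cls j) f q < +oo.
Proof.
have [Hfin|Hinf] := pselect (finite_set (Aset (w j))).
  apply: fin_esum_lt; apply: (sub_finite_set _ Hfin).
  by move=> q [_ [q0 [H _]]]; split.
have Cinf := A_inf_Cinf (w j) Hinf.
have [g [c [g0 gb c1 Hc]]] := count_from_gamma (w j) s' (w0 j) Cinf (Hd (w j) (w0 j)).
apply: (@shell_sum F m R _ _ (powR kR g) (powR kR (n%:R + (h - w j) * s - s)) c).
- by move=> q [q0 _].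
- exact: f0.
- move=> q d [_ [q0 [_ Hup]]] Hsh; rewrite lee_fin.
  apply: le_trans (term_bound s (h - w j) q (ltW s0) q0 Hup) _.
  by rewrite (qn_shell q d Hsh) powR_natpow // ltW // kR_gt0.
- move=> d; rewrite -powR_natpow; last exact: ltW kR_gt0.
  apply: (le_trans _ (Hc (kR ^+ d)%R (@exprn_ege1 _ d _ (ltW kR_gt1)))).
  rewrite CcountE; apply: esum_subset => [q [[_ [q0 [Hlow _]]] Hsh]|q _]; last exact: lee01.
  by split => //; split => //; rewrite (qn_shell q d Hsh).
- exact: powR_gt0 kR_gt0.
- exact: powR_gt0 kR_gt0.
- rewrite -powR_addE ?kR_gt0 //; apply: (@powR_lt1' R _ _ kR_gt1).
  have H1 : (s' * w j <= s * w j)%R by rewrite ler_wpM2r // ?w0 // ltW.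
  have H2 : ((h - w j) * s = s - s' - w j * s)%R by rewrite mulrBl hs.
  rewrite H2; move: gb H1; rewrite mulrDr mulr1 [(w j * s)%R]mulrC.
  move=> gb H1; lra.
- exact: le_trans ler01 c1.
Qed.

Lemma rem_fin : \esum_(q in @nzvec F m `&` Rem) f q < +oo.
Proof.
apply: (@shell_sum F m R _ _ (kR ^+ m) (powR kR (n%:R + (- w J) * s - s)) (kR ^+ m)).
- by move=> q [q0 _].
- exact: f0.
- move=> q d [_ [q0 HR]] Hsh; rewrite lee_fin.
  apply: le_trans (term_bound s (- w J) q (ltW s0) q0 (ltW HR)) _.
  by rewrite (qn_shell q d Hsh) powR_natpow // ltW // kR_gt0.
- move=> d.
  apply: (@le_trans _ _ (\esum_(q in [set q : T | (qnorm q <= k ^ d)%N]) 1)).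
    apply: esum_subset => [q [_ Hsh]|q _]; last exact: lee01.
    by rewrite /= Hsh.
  apply: (le_trans (count_ball F m R d)).
  by rewrite lee_fin natrX -exprM -exprD mulSn (mulnC d).
- by rewrite exprn_gt0 // kR_gt0.
- exact: powR_gt0 kR_gt0.
- rewrite -(powR_mulrn m (ltW kR_gt0)) -powR_addE ?kR_gt0 //; apply: (@powR_lt1' R _ _ kR_gt1).
  have H2 : (- w J * s = - (J%:R * (s - s')))%R by rewrite mulNr /w -mulrA hs.
  have s0' := s0; rewrite H2; move: HJ; rewrite natrD => HJ'; lra.
- by rewrite exprn_ge0 // ltW // kR_gt0.
Qed.

Lemma main_fin : \esum_(q in @nzvec F m) f q < +oo.
Proof.
apply: le_lt_trans split_bound _; apply: lte_add_pinfty; last exact: rem_fin.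
by apply: lte_sum_pinfty => j _; exact: cls_fin.
Qed.
End Fin.
End Main.
Theorem lemma13 (R : realType) (F : finFieldType) (m n : nat)
  (psi : polyvec F m -> R)
  (Hval : forall q, psi q = 0 \/ exists r : int, psi q = (#|F|%:R : R) ^ r)
  (Hle1 : forall q, psi q <= 1)
  (Hinf : infinite_set [set q | 0 < psi q]) :
  (Order.min (delta_psi n psi) n%:R%:E >= Order.min (eta_psi n psi) n%:R%:E)%E.
Proof.
have psi0 : forall q, 0 <= psi q.
  by move=> q; case: (Hval q) => [->|[r ->]] //; rewrite exprz_ge0.
have dge0 : (0 <= delta_psi n psi)%E.
  apply: (le_trans (@delta_v_ge0 R F m n psi 0 (lexx 0))).
  by apply: ereal_sup_ubound; exists 0%R => //=.
rewrite leNgt; apply/negP => Hlt.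
set a := Order.min _ _ in Hlt; set b := Order.min _ _ in Hlt.
have a0 : (0 <= a)%E by rewrite /a le_min dge0 lee_fin ler0n.
have bn : (b <= n%:R%:E)%E by rewrite /b ge_min lexx orbT.
have an : (a <= n%:R%:E)%E by rewrite /a ge_min lexx orbT.
case Ea : a a0 an Hlt => [x| |] a0 an Hlt; last 2 first.
- by move: an a0; rewrite leNgt ltry.
- by move: a0; rewrite leNgt ltNye.
case Eb : b bn Hlt => [y| |] bn Hlt; last 2 first.
- by move: bn; rewrite leNgt ltry.
- by move: Hlt; rewrite ltNge leNye.
rewrite !lee_fin in a0 an bn; rewrite lte_fin in Hlt.
pose s' := x + (y - x) / 3; pose s := x + (y - x) * 2 / 3.
have s'0 : 0 < s' by rewrite /s'; lra.
have ss' : s' < s by rewrite /s /s'; lra.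
have Hd1 : (delta_psi n psi < s'%:E)%E.
  have : (x%:E < s'%:E)%E by rewrite lte_fin /s'; lra.
  rewrite -Ea /a gt_min => /orP [H0|]; first exact: H0.
  rewrite lte_fin => H.
  exfalso; move: H bn Hlt; rewrite /s' => H bn' Hlt'; clear -H bn' Hlt'; lra.
have Hd : forall v : R, 0 <= v -> (delta_v n psi v < s'%:E)%E.
  move=> v v0; apply: le_lt_trans Hd1; apply: ereal_sup_ubound; by exists v.
have He : (s%:E < eta_psi n psi)%E.
  have : (s%:E < y%:E)%E by rewrite lte_fin /s; lra.
  by rewrite -Eb /b lt_min => /andP [].
have Hfin := @main_fin R F m n psi psi0 Hle1 s s' s'0 ss' Hd.
have : (eta_psi n psi <= s%:E)%E.
  apply: ereal_inf_lbound; exists s => //.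
by rewrite leNgt He.
Qed.
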